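(* Let $p$ be a prime and $G$ a finite $p$-group of exponent $p$ in which every non-abelian subgroup $H$ satisfies $C_G(H)\le H$. If $|G|>p^p$, then $G$ is elementary abelian. Otherwise, either $G$ is elementary abelian, or $G$ has maximal class and has an elementary abelian subgroup of index $p$.
   Context: A group of order $p^n$ ($n\ge 2$) has maximal class if its nilpotency class is $n-1$. $C_G(H)$ denotes the centralizer of $H$ in $G$. *)

(* Defs.v *)
From mathcomp Require Import all_boot all_fingroup all_solvable.
Set Implicit Arguments. Unset Strict Implicit. Unset Printing Implicit Defensive.
Local Open Scope group_scope.

Definition maximal_class (p : nat) (gT : finGroupType) (G : {set gT}) : Prop :=
  2 <= logn p #|G| /\ nil_class G = (logn p #|G|).-1.

(* Main.v *)
Require Import Defs.
From mathcomp Require Import all_boot all_fingroup all_solvable.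
Set Implicit Arguments. Unset Strict Implicit. Unset Printing Implicit Defensive.
Local Open Scope group_scope.

Section Comm.
Variables (gT : finGroupType) (A : {group gT}) (x : gT).
Hypotheses (abA : abelian A) (nAx : x \in 'N(A)).

Lemma commxA a : a \in A -> [~ a, x] \in A.
Proof. by move=> Aa; rewrite commgEl groupM ?groupV ?memJ_norm. Qed.

Lemma commx_morphM : {in A &, {morph (fun a => [~ a, x]) : u v / u * v}}.
Proof.
move=> u v Au Av /=; rewrite commMgJ; congr (_ * _).
by rewrite /conjg (centsP abA _ (commxA Au) _ Av) mulKg.
Qed.

Definition cxm := Morphism commx_morphM.

Lemma ker_cxm : 'ker cxm = 'C_A[x].
Proof.
apply/setP=> a; apply/idP/idP.
  move=> ka; have Aa := dom_ker ka; move/(kerP _ Aa): ka => /= ax.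
  by rewrite inE Aa /=; apply/cent1P; apply/commgP; rewrite /= ax.
case/setIP=> Aa /cent1P cax; apply/(kerP _ Aa) => /=; apply/eqP; exact/commgP.
Qed.

Lemma card_cxm (B : {group gT}) : B \subset A ->
  #|B| = (#|'C_B[x]| * #|cxm @* B|)%N.
Proof.
move=> sBA; rewrite card_morphim ker_cxm (setIidPr sBA).
have -> : 'C_B[x] = B :&: 'C_A[x] by rewrite setIA (setIidPl sBA).
by rewrite -indexgI Lagrange // subsetIl.
Qed.

Lemma cxm_sub (B : {group gT}) : B \subset A -> x \in 'N(B) -> cxm @* B \subset B.
Proof.
move=> sBA nBx; apply/subsetP=> _ /morphimP[b Ab Bb ->] /=.
by rewrite commgEl groupM ?groupV ?memJ_norm.
Qed.

End Comm.

Fixpoint Pw (gT : finGroupType) (a y : gT) n :=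
  if n is m.+1 then a * (Pw a y m) ^ y else 1.

Lemma Pw_exp (gT : finGroupType) (a x : gT) n : (a * x) ^+ n = Pw a x^-1 n * x ^+ n.
Proof.
elim: n => [|n IH]; first by rewrite !expg0 mulg1.
rewrite expgS IH /= expgS conjgE invgK !mulgA mulgKV.
by rewrite -!mulgA; congr (_ * _); rewrite !mulgA mulgKV.
Qed.

Lemma Pw_mem (gT : finGroupType) p (a y : gT) (U : {group gT}) :
  (forall k, 0 < k < p -> a ^ (y ^+ k) \in U) ->
  forall n k, 0 < k -> k + n <= p -> Pw a y n ^ (y ^+ k) \in U.
Proof.
move=> Ui; elim=> [|n IH] k k0 kn /=; first by rewrite conj1g group1.
rewrite conjMg -conjgM -expgS groupM //.
  by apply: Ui; rewrite k0 /=; apply: leq_trans kn; rewrite addnS ltnS leq_addr.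
by apply: IH => //; rewrite addSnnS.
Qed.

Section Main.
Variables (gT : finGroupType) (p : nat) (G A : {group gT}).
Hypotheses (pr_p : prime p) (pG : p.-group G) (expG : exponent G = p)
 (hypH : forall H : {group gT}, H \subset G -> ~~ abelian H -> 'C_G(H) \subset H)
 (nsAG : A <| G) (cAG : 'C_G(A) = A) (ntG : G :!=: 1).

Lemma abA : abelian A.
Proof. by rewrite /abelian -{1}cAG subsetIr. Qed.

Lemma sAG : A \subset G. Proof. exact: normal_sub nsAG. Qed.

Lemma orderG x : x \in G -> x != 1 -> #[x] = p.
Proof.
move=> Gx ntx; apply/(prime_nt_dvdP pr_p); first by rewrite order_eq1.
by rewrite -expG dvdn_exponent.
Qed.

Lemma ntCA x : x \in G -> 'C_A[x] != 1.
Proof.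
move=> Gx; have ntZ : 'Z(G) != 1 by rewrite center_nil_eq1 ?(pgroup_nil pG).
apply: contraNneq ntZ => CA1; apply/eqP/trivgP; rewrite -CA1 subsetI.
apply/andP; split; last by rewrite sub_cent1 (subsetP _ x Gx) // centsC subsetIr.
by rewrite -cAG subsetI center_sub /= centsC (subset_trans sAG) // centsC subsetIr.
Qed.

Lemma cardCx x : x \in G -> x \notin A -> #|'C_A[x]| = p.
Proof.
move=> Gx nAx'.
have nAx : x \in 'N(A) by rewrite (subsetP (normal_norm nsAG)).
pose P := fun B : {group gT} => (x \in 'N(B)) && ~~ (B \subset 'C[x]).
have PA : P A.
  rewrite /P nAx /= sub_cent1; apply: contra nAx' => cAx.
  by rewrite -cAG inE Gx.
have [B minB sBA] := mingroup_exists PA.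
have [/andP[nBx ncBx] minPB] := mingroupP minB.
have sBG : B \subset G := subset_trans sBA sAG.
set H := B <*> <[x]>.
have nBX : <[x]> \subset 'N(B) by rewrite cycle_subG.
have sHG : H \subset G by rewrite join_subG sBG cycle_subG.
have nabH : ~~ abelian H.
  apply: contra ncBx => abH; rewrite -cent_cycle.
  by apply: sub_abelian_cent2 abH _ _; [apply: joing_subl | apply: joing_subr].
have cGH := hypH sHG nabH.
have oX : #|<[x]>| = p by rewrite -orderE orderG //; apply: contra nAx' => /eqP->.
have TI : <[x]> :&: A = 1 by apply: prime_TIg; rewrite ?oX // cycle_subG.
have sCB : 'C_A[x] \subset B.
  have : 'C_A[x] \subset H :&: A.
    rewrite subsetI subsetIl andbT; apply: subset_trans cGH.
    rewrite subsetI (subset_trans (subsetIl _ _) sAG) /= centY subsetI.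
    rewrite cent_cycle subsetIr andbT (subset_trans (subsetIl _ _)) //.
    by apply: subset_trans (centS sBA); rewrite -abelianE abA.
  by rewrite /H (norm_joinEr nBX) -group_modl // TI mulg1.
have ntC := ntCA Gx.
have sCCB : 'C_A[x] \subset 'C_B[x] by rewrite subsetI sCB subsetIr.
set f := cxm abA nAx.
set K := f @* B.
have sKB : K \subset B := cxm_sub abA nAx sBA nBx.
have cardB := card_cxm abA nAx sBA.
have nKx : x \in 'N(K).
  rewrite inE; apply/subsetP=> _ /imsetP[_ /morphimP[b Ab Bb ->] ->] /=.
  rewrite conjRg (_ : x ^ x = x); last by rewrite /conjg mulKg.
  have Bbx : b ^ x \in B by rewrite memJ_norm.
  exact: (mem_morphim f (subsetP sBA _ Bbx) Bbx).
have cKx : K \subset 'C[x].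
  apply: contraT => ncKx.
  have KB : K :=: B by apply: minPB => //; rewrite /P nKx.
  have : #|'C_B[x]| = 1%N.
    move: cardB; rewrite -/f -/K KB => /eqP; rewrite -{1}(mul1n #|B|) eqn_pmul2r //.
    by move/eqP.
  move/eqP; rewrite -trivg_card1 => /eqP CB1.
  by move: ntC; rewrite -subG1 -CB1 sCCB.
have [b Bb ncb] := subsetPn ncBx.
set L := <[b]> <*> K.
have sLB : L \subset B by rewrite join_subG cycle_subG Bb sKB.
have LB : L :=: B.
  apply: minPB => //; rewrite /P; apply/andP; split.
    rewrite inE conjYg join_subG -cycleJ cycle_subG conjg_mulR.
    rewrite (normP nKx) joing_subr andbT groupM //.
      by rewrite (subsetP (joing_subl _ _)) // cycle_id.
    apply: (subsetP (joing_subr _ _)); apply: mem_morphim => //.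
    exact: (subsetP sBA).
  apply: contra ncb => sLC; apply: (subsetP sLC).
  by rewrite (subsetP (joing_subl _ _)) // cycle_id.
have cbK : commute <[b]> K.
  apply: centC; apply: sub_abelian_cent2 abA _ _; last exact: subset_trans sKB sBA.
  by rewrite cycle_subG (subsetP sBA).
have leL : #|B| <= p * #|K|.
  have h1 : #|<[b]> * K| <= #|<[b]>| * #|K| by rewrite mul_cardG leq_pmulr ?cardG_gt0.
  have h2 : #|<[b]>| <= p.
    rewrite -orderE dvdn_leq ?prime_gt0 // -expG dvdn_exponent //.
    exact: (subsetP sBG).
  by rewrite -LB /L comm_joingE // (leq_trans h1) // leq_mul.
have leCB : #|'C_B[x]| <= p.
  by rewrite -(leq_pmul2r (cardG_gt0 K)) -cardB.
have leC : #|'C_A[x]| <= p := leq_trans (subset_leq_card sCCB) leCB.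
have pC : p.-group 'C_A[x] := pgroupS (subset_trans (subsetIl _ _) sAG) pG.
have [e eC] : exists e, #|'C_A[x]| = (p ^ e)%N.
  by exists (logn p #|'C_A[x]|); rewrite -card_pgroup.
rewrite eC; move: leC ntC; rewrite eC; case: e eC => [|[|e]] eC.
- by move=> _; rewrite trivg_card1 eC.
- by rewrite expn1.
move=> lt _; exfalso; move: lt; rewrite leqNgt.
by rewrite (leq_trans _ (leq_pexp2l _ (_ : 2 <= e.+2)%N)) ?prime_gt0 // expnS expn1 -{1}(muln1 p) ltn_pmul2l ?prime_gt0 ?prime_gt1.
Qed.


Lemma burnside_sum : exists N,
  \sum_(g in G) #|'C_A[g]| = (N * #|G|)%N.
Proof.
have actsA : [acts G, on A | 'J] by rewrite astabsJ normal_norm.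
exists #|orbit 'J G @: A|; rewrite -(Frobenius_Cauchy actsA).
apply: eq_bigr => g _; congr #|_|.
by rewrite afixJ cent_set1.
Qed.

Lemma cardA_ge x : x \in G -> x \notin A -> p < #|A|.
Proof.
move=> Gx nAx; rewrite -(cardCx Gx nAx) proper_card // properE subsetIl /=.
rewrite subsetI subxx sub_cent1; apply: contra nAx => cAx.
by rewrite -cAG inE Gx.
Qed.

Lemma indexA x : x \in G -> x \notin A -> #|G : A| = p.
Proof.
move=> Gx nAx.
have [N eN] := burnside_sum.
have esum : \sum_(g in G) #|'C_A[g]| = (#|A| * #|A| + (#|G| - #|A|) * p)%N.
  rewrite (big_setID A) /= (setIidPr sAG).
  rewrite (eq_bigr (fun _ => #|A|)); last first.
    move=> g Ag; rewrite (setIidPl _) // sub_cent1.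
    exact: (subsetP abA).
  rewrite [X in (_ + X)%N](eq_bigr (fun _ => p)); last first.
    by move=> g /setDP[Gg nAg]; apply: cardCx.
  by rewrite !sum_nat_const cardsD (setIidPr sAG).
have [d eA] : exists d, #|A| = (p ^ d)%N.
  by exists (logn p #|A|); rewrite -card_pgroup // (pgroupS sAG pG).
have [n eG] : exists n, #|G| = (p ^ n)%N.
  by exists (logn p #|G|); rewrite -card_pgroup.
have [m _ ei] : exists2 m, m <= n & #|G : A| = (p ^ m)%N.
  by apply/dvdn_pfactor => //; rewrite -eG dvdn_indexg.
have p1 := prime_gt1 pr_p; have p0 := prime_gt0 pr_p.
have d2 : 2 <= d.
  by have := cardA_ge Gx nAx; rewrite eA -{1}(expn1 p) ltn_exp2l.
have m1 : 0 < m.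
  rewrite lt0n; apply: contra nAx => /eqP m0.
  have : #|G : A| == 1%N by rewrite ei m0.
  by rewrite indexg_eq1 => /subsetP->.
rewrite ei; case: m m1 ei => [|[|m]] m1 ei; first by [].
  by rewrite expn1.
exfalso.
have eGA : #|G| = (#|A| * #|G : A|)%N by rewrite (Lagrange sAG).
set P := #|A|; set Q := #|G : A|.
have P0 : 0 < P by rewrite cardG_gt0.
have e2 : (P * (N * Q) = P * (P + (Q - 1) * p))%N.
  rewrite mulnA (mulnC P N) -mulnA -eGA -eN esum eGA.
  by rewrite [in RHS]mulnDr [in RHS]mulnA mulnBr muln1.
move/eqP: e2; rewrite eqn_pmul2l // => /eqP eq1.
have pp2Q : (p * p %| Q)%N by rewrite /Q ei !expnS mulnA dvdn_mulr.
have pp2P : (p * p %| P)%N.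
  by rewrite /P eA -(subnKC d2) expnD expnS expn1 dvdn_mulr.
have : (p * p %| (Q - 1) * p)%N.
  by rewrite -(dvdn_addr _ pp2P) -eq1 dvdn_mull.
rewrite dvdn_pmul2r // => pQ1.
have pQ : (p %| Q)%N by apply: dvdn_trans pp2Q; apply: dvdn_mulr.
have : (p %| Q - (Q - 1))%N by rewrite dvdn_sub.
rewrite subKn ?dvdn1; first by rewrite (gtn_eqF p1).
by rewrite /Q ei expn_gt0 p0.
Qed.

Lemma card_gen_le (S : {set gT}) : S \subset A -> #|<<S>>| <= p ^ #|S|.
Proof.
move: {2}#|S| (leqnn #|S|) => n; elim: n S => [|n IH] S leS sSA.
  move: leS; rewrite leqn0 cards_eq0 => /eqP->; by rewrite gen0 cards0 expn0 cards1.
case: (set_0Vmem S) => [-> | [s Ss]]; first by rewrite gen0 cards1 expn_gt0 prime_gt0.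
have leT : #|S :\ s| <= n by move: leS; rewrite (cardsD1 s) Ss.
have sTA : S :\ s \subset A by rewrite (subset_trans (subsetDl _ _)).
have As : s \in A := subsetP sSA s Ss.
have eS : #|S| = (#|S :\ s|).+1 by rewrite (cardsD1 s S) Ss.
rewrite eS -{1}(setD1K Ss) -joingE -joing_idr -joing_idl.
have cST : commute <[s]> <<S :\ s>>.
  apply: centC; apply: sub_abelian_cent2 abA _ _; first by rewrite cycle_subG.
  by rewrite gen_subG.
rewrite (comm_joingE cST).
have h1 : #|<[s]> * <<S :\ s>>| <= #|<[s]>| * #|<<S :\ s>>|.
  by rewrite mul_cardG leq_pmulr ?cardG_gt0.
apply: (leq_trans h1); rewrite expnS leq_mul //.
  rewrite -orderE dvdn_leq ?prime_gt0 // -expG dvdn_exponent //.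
  exact: (subsetP sAG).
by apply: (leq_trans (IH _ leT sTA)); rewrite leq_exp2l ?prime_gt1.
Qed.

Lemma cardA_le x : x \in G -> x \notin A -> #|A| <= p ^ p.-1.
Proof.
move=> Gx nAx.
have nAx' : x \in 'N(A) by rewrite (subsetP (normal_norm nsAG)).
set f := cxm abA nAx'; set D := f @* A.
have eAD : #|A| = (p * #|D|)%N by rewrite (card_cxm abA nAx' (subxx A)) cardCx.
have sDA : D \subset A := cxm_sub abA nAx' (subxx A) nAx'.
have DPhi : D \subset 'Phi(G).
  rewrite (Phi_joing pG); apply: subset_trans (joing_subl _ _).
  apply/subsetP => _ /morphimP[a' Aa' _ ->] /=; apply: mem_commg => //.
  exact: (subsetP sAG).
have p1 := prime_gt1 pr_p; have p0 := prime_gt0 pr_p.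
have [a Aa nDa] : exists2 a, a \in A & a \notin D.
  apply/subsetPn; apply/negP => sAD.
  by move: (subset_leq_card sAD); rewrite eAD -{2}(mul1n #|D|) leq_pmul2r ?cardG_gt0 // leqNgt p1.
have Ga : a \in G := subsetP sAG a Aa.
have oa : #[a] = p by apply: orderG => //; apply: contra nDa => /eqP->.
have eA : <[a]> * D = A.
  apply/eqP; rewrite eqEcard mul_subG ?cycle_subG //=.
  have TI : <[a]> :&: D = 1 by apply: prime_TIg; rewrite -?orderE ?oa ?cycle_subG.
  by rewrite (TI_cardMg TI) -orderE oa eAD.
set y := x^-1.
have Gy : y \in G by rewrite groupV.
have nAy : y \in 'N(A) by rewrite (subsetP (normal_norm nsAG)).
set T := [set a ^ (y ^+ i.+1) | i : 'I_p.-1].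
set U := <<T>>%G.
have sTA : T \subset A.
  by apply/subsetP=> _ /imsetP[i _ ->]; rewrite memJ_norm // groupX.
have Ui : forall k, 0 < k < p -> a ^ (y ^+ k) \in U.
  move=> k /andP[k0 kp]; apply: mem_gen; apply/imsetP.
  have kp' : k.-1 < p.-1 by rewrite -(ltn_add2r 1) !addn1 !prednK.
  by exists (Ordinal kp'); rewrite //= prednK.
have Pp : Pw a y p = 1.
  have e1 : (a * x) ^+ p = 1 by rewrite -expG expg_exponent // groupM.
  have e2 : x ^+ p = 1 by rewrite -expG expg_exponent.
  by rewrite Pw_exp e2 mulg1 in e1.
have aU : a \in U.
  move: Pp; rewrite -(prednK p0) /= => Pp.
  have : Pw a y p.-1 ^ y \in U.
    have := @Pw_mem _ p a y U Ui p.-1 1 isT.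
    by rewrite expg1 add1n prednK // leqnn; apply.
  by rewrite -(mulKg a (Pw a y p.-1 ^ y)) Pp mulg1 groupV.
have nUy : y \in 'N(U).
  rewrite inE -genJ gen_subG; apply/subsetP => _ /imsetP[t /imsetP[i _ ->] ->].
  rewrite -conjgM -expgSr.
  have : i.+2 <= p by have : i.+2 <= p.-1.+1 := ltn_ord i; rewrite prednK.
  rewrite leq_eqVlt => /orP[/eqP-> | ip]; last by apply: Ui.
  have yp : y ^+ p = 1 by rewrite -expG expg_exponent.
  by rewrite yp conjg1.
have nUx : <[x]> \subset 'N(U) by rewrite cycle_subG -(invgK x) groupV.
have oX : #|<[x]>| = p by rewrite -orderE orderG //; apply: contra nAx => /eqP->.
have TIx : A :&: <[x]> = 1.
  by rewrite setIC; apply: prime_TIg; rewrite ?oX // cycle_subG.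
have GAx : A * <[x]> = G.
  apply/eqP; rewrite eqEcard mul_subG ?cycle_subG ?sAG //=.
  rewrite -(Lagrange sAG) (indexA Gx nAx) -oX.
  by rewrite (TI_cardMg TIx).
have sUG : U \subset G by rewrite gen_subG (subset_trans sTA sAG).
have eJ : 'Phi(G) <*> (U :|: <[x]>) = G.
  apply/eqP; rewrite eqEsubset join_subG Phi_sub subUset sUG cycle_subG Gx /=.
  have sUJ : U \subset 'Phi(G) <*> (U :|: <[x]>).
    exact: subset_trans (subsetUl _ _) (joing_subr _ _).
  have sXJ : <[x]> \subset 'Phi(G) <*> (U :|: <[x]>).
    exact: subset_trans (subsetUr _ _) (joing_subr _ _).
  rewrite -{1}GAx -eA !mul_subG //; first by rewrite cycle_subG (subsetP sUJ).
  exact: subset_trans DPhi (joing_subl _ _).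
have eG := Phi_nongen eJ.
have leG : #|G| <= #|U| * p.
  rewrite -eG -joingE (norm_joinEr nUx) -oX.
  by rewrite mul_cardG leq_pmulr ?cardG_gt0.
have leAU : #|A| <= #|U|.
  by rewrite -(leq_pmul2r p0); apply: leq_trans leG; rewrite -(Lagrange sAG) (indexA Gx nAx).
apply: (leq_trans leAU); apply: (leq_trans (card_gen_le sTA)).
rewrite leq_exp2l //; apply: (leq_trans (leq_imset_card _ _)).
by rewrite card_ord.
Qed.

Lemma lcn_lower x : x \in G -> x \notin A ->
  forall i, #|A| <= p ^ i.+1 * #|'L_i.+2(G)|.
Proof.
move=> Gx nAx.
have nAx' : x \in 'N(A) by rewrite (subsetP (normal_norm nsAG)).
set f := cxm abA nAx'.
have nAG := normal_norm nsAG.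
have sL2 : 'L_2(G) \subset A.
  rewrite lcn2; apply: der1_min => //; apply: cyclic_abelian; apply: prime_cyclic.
  by rewrite card_quotient // (indexA Gx nAx).
have sLA : forall i, 'L_i.+2(G) \subset A.
  elim=> // i IH; rewrite lcnSn; apply: subset_trans IH.
  by rewrite commg_subl lcn_norm.
have sfL : forall B : {group gT}, f @* B \subset [~: B, G].
  move=> B; apply/subsetP=> _ /morphimP[b Ab Bb ->] /=.
  exact: mem_commg.
have cardL : forall B : {group gT}, B \subset A -> #|B| <= p * #|f @* B|.
  move=> B sBA; rewrite {1}(card_cxm abA nAx' sBA) leq_mul2r -(cardCx Gx nAx).
  by rewrite subset_leq_card ?orbT // setSI.
elim=> [|i IH].
  rewrite expn1; apply: (leq_trans (cardL _ (subxx A))); rewrite leq_mul2l.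
  rewrite subset_leq_card ?orbT // lcn2 derg1.
  by apply: subset_trans (sfL A) _; apply: commSg; exact: sAG.
apply: (leq_trans IH); rewrite (expnSr p i.+1) -mulnA leq_mul2l; apply/orP; right.
apply: (leq_trans (cardL _ (sLA i))); rewrite leq_mul2l; apply/orP; right.
by rewrite subset_leq_card // lcnSn sfL.
Qed.

Lemma maxclass x : x \in G -> x \notin A ->
  exists d, [/\ #|A| = (p ^ d)%N, #|G| = (p ^ d.+1)%N, 2 <= d & nil_class G = d].
Proof.
move=> Gx nAx.
have p1 := prime_gt1 pr_p.
have [d eA] : exists d, #|A| = (p ^ d)%N.
  by exists (logn p #|A|); rewrite -card_pgroup // (pgroupS sAG pG).
have eG : #|G| = (p ^ d.+1)%N by rewrite -(Lagrange sAG) (indexA Gx nAx) eA expnSr.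
have d2 : 2 <= d by have := cardA_ge Gx nAx; rewrite eA -{1}(expn1 p) ltn_exp2l.
exists d; split => //.
apply/eqP; rewrite eqn_leq; apply/andP; split.
  have := nil_class_pgroup pG; rewrite eG pfactorK //= (maxn_idPr _) //.
  exact: leq_trans d2.
case: d d2 eA eG => [|[|e]] // _ eA eG.
rewrite ltnNge; apply/negP => /(lcn_nil_classP _ (pgroup_nil pG)) L1.
by have := lcn_lower Gx nAx e; rewrite L1 cards1 muln1 eA leqNgt ltn_exp2l // ltnSn.
Qed.

End Main.

Unset Implicit Arguments.

Theorem theorem6p14 (p : nat) (gT : finGroupType) (G : {group gT}) :
  prime p -> p.-group G -> exponent G = p ->
  (forall H : {group gT}, H \subset G -> ~~ abelian H -> 'C_G(H) \subset H) ->
  (p ^ p < #|G| -> p.-abelem G) /\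
  (#|G| <= p ^ p ->
     p.-abelem G \/
     (maximal_class p G /\
      exists A : {group gT}, [/\ A \subset G, #|G : A| = p & p.-abelem A])).
Proof.
move=> pr_p pG expG hypH.
have [abG | nabG] := boolP (abelian G).
  have aG : p.-abelem G by rewrite abelemE // abG expG dvdnn.
  by split=> // _; left.
have ntG : G :!=: 1 by apply: contra nabG => /eqP->; exact: abelian1.
have g1 : (fun A : {group gT} => (A <| G) && abelian A) 1%G.
  by rewrite /= normal1 abelian1.
have [A maxA _] := @maxgroup_exists _ (fun A : {group gT} => (A <| G) && abelian A) 1%G g1.
have /SCN_P[nsAG cAG] := max_SCN pG maxA.
have sAG : A \subset G := normal_sub nsAG.
have [x Gx nAx] : exists2 x, x \in G & x \notin A.
  apply/subsetPn; apply: contra nabG => sGA.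
  exact: abelianS sGA (abA cAG).
have [d [eA eG d2 nc]] := maxclass pr_p pG expG hypH nsAG cAG ntG Gx nAx.
have leA := cardA_le pr_p pG expG hypH nsAG cAG ntG Gx nAx.
have p0 := prime_gt0 pr_p.
have leG : #|G| <= p ^ p.
  rewrite eG leq_exp2l ?prime_gt1 //; move: leA; rewrite eA leq_exp2l ?prime_gt1 // => h.
  by apply: leq_ltn_trans h _; rewrite ltn_predL.
split; first by rewrite ltnNge leG.
move=> _; right; split.
  split; first by rewrite eG pfactorK // ltnS (leq_trans _ d2).
  by rewrite nc eG pfactorK.
exists A; split => //; first exact: (indexA pr_p pG expG hypH nsAG cAG ntG Gx nAx).
rewrite abelemE // (abA cAG) /= -expG; exact: exponentS.
Qed.
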